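(* Let $\mathcal{A}$ be a znz-pattern with $m\ge2$ nonzero diagonal entries such that $D(\mathcal{A})$ has no $k$-cycles with $2\le k\le m$. Then $\mathcal{A}$ is not potentially nilpotent over any field $\mathbb{F}$.
   Context: A znz-pattern is an $n\times n$ matrix with entries in $\{*,0\}$; a realization over $\mathbb{F}$ is a matrix in $M_n(\mathbb{F})$ whose nonzero entries are exactly at the $*$ positions; $\mathcal{A}$ is potentially nilpotent over $\mathbb{F}$ if some realization is nilpotent. The digraph $D(\mathcal{A})$ has vertex set $\{1,\ldots,n\}$ and an arc $(i,j)$ whenever $\mathcal{A}_{i,j}=*$. A $k$-cycle is a sequence of $k$ distinct vertices $i_1,\ldots,i_k$ with arcs $(i_1,i_2),\ldots,(i_{k-1},i_k),(i_k,i_1)$. *)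

(* Defs.v *)
From HB Require Import structures.
From mathcomp Require Import all_boot all_order all_algebra.
Set Implicit Arguments. Unset Strict Implicit. Unset Printing Implicit Defensive.
Import GRing.Theory.
Local Open Scope ring_scope.

(* A znz-pattern of order n: an n x n matrix with entries in {*,0};
   true encodes *, false encodes 0. *)
Definition znz_pattern (n : nat) := 'M[bool]_n.

Definition realization (F : fieldType) (n : nat) (P : znz_pattern n)
  (A : 'M[F]_n) : Prop :=
  forall i j, (A i j != 0) = P i j.

Definition nilpotent_mx (F : fieldType) (n : nat) (A : 'M[F]_n) : Prop :=
  exists k : nat, A ^+ k = 0.

Definition potentially_nilpotent (F : fieldType) (n : nat) (P : znz_pattern n)
  : Prop :=
  exists A : 'M[F]_n, realization P A /\ nilpotent_mx A.

Definition arc (n : nat) (P : znz_pattern n) : rel 'I_n := fun i j => P i j.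

Definition has_k_cycle (n : nat) (P : znz_pattern n) (k : nat) : Prop :=
  exists s : seq 'I_n, [/\ size s = k, uniq s & cycle (arc P) s].

Definition num_nonzero_diag (n : nat) (P : znz_pattern n) : nat :=
  #|[set i : 'I_n | P i i]|.

(* Main.v *)
Require Import Defs.
From HB Require Import structures.
From mathcomp Require Import all_boot all_order all_algebra.
From mathcomp Require Import fingroup perm.
Set Implicit Arguments. Unset Strict Implicit. Unset Printing Implicit Defensive.
Import GRing.Theory.
Local Open Scope ring_scope.

Lemma nonfix_big n (P : znz_pattern n) (s : 'S_n) m :
  s != 1%g ->
  (forall k : nat, (2 <= k)%N -> (k <= m)%N -> ~ has_k_cycle P k) ->
  (forall i, s i != i -> P i (s i)) ->
  (m < #|[set i | s i != i]|)%N.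
Proof.
move=> s1 hcyc hP; set N := [set i | s i != i].
rewrite ltnNge; apply/negP => hN.
have [i0 hi0] : exists i0, s i0 != i0.
  apply/existsP; apply: contraR s1; rewrite negb_exists => /forallP h.
  by apply/eqP/permP => x; rewrite perm1; apply/eqP; move: (h x); rewrite negbK.
have sinj : injective s by apply: perm_inj.
set o := orbit s i0.
have inN : forall x, x \in o -> s x != x.
  move=> x; rewrite -fconnect_orbit (fconnect_sym sinj) => /iter_findex.
  move=> hit; apply/eqP => sx; rewrite iter_fix // in hit.
  by rewrite -hit sx eqxx in hi0.
have cyc : path.cycle (Defs.arc P) o.
  apply: (sub_in_cycle (P := fun x => s x != x)); last exact: cycle_orbit.
    by move=> x y hx _ /eqP <-; apply: hP.
  by apply/allP => x /inN.
have hsz : (size o <= #|N|)%N.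
  rewrite cardE; apply: uniq_leq_size; first exact: orbit_uniq.
  by move=> x /inN hx; rewrite mem_enum inE.
have hsz2 : (2 <= size o)%N.
  have h1 : i0 \in o by apply: in_orbit.
  have h2 : s i0 \in o by apply: mem_orbit.
  move: h1 h2 hi0; case: (o) => [|a [|b t]] //=; rewrite !inE.
  by move=> /eqP -> /eqP ->; rewrite eqxx.
apply: (hcyc (size o) hsz2 (leq_trans hsz hN)).
by exists o; split => //; apply: orbit_uniq.
Qed.
Lemma telescope (R : pzRingType) (x : R) k :
  (1 - x) * \sum_(i < k) x ^+ i = 1 - x ^+ k.
Proof.
elim: k => [|k IH]; first by rewrite big_ord0 mulr0 expr0 subrr.
by rewrite big_ord_recr /= mulrDr IH mulrBl mul1r -exprS addrA subrK.
Qed.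

Lemma map_mxX (F : fieldType) n (A : 'M[F]_n.+1) k :
  map_mx polyC (A ^+ k) = (map_mx polyC A) ^+ k.
Proof.
elim: k => [|k IH]; first by rewrite !expr0 map_mx1.
by rewrite !exprS -!mulmxE map_mxM IH.
Qed.

Lemma det_unit (F : fieldType) n (A : 'M[F]_n.+1) k : A ^+ k = 0 ->
  \det (1 - 'X *: map_mx polyC A) \is a GRing.unit.
Proof.
move=> Ak.
set B := 'X *: map_mx polyC A.
have Bk : B ^+ k = 0 by rewrite /B exprZn -map_mxX Ak map_mx0 scaler0.
have H := telescope B k. rewrite Bk subr0 in H.
apply/unitrP; exists (\det (\sum_(i < k) B ^+ i)).
by rewrite mulrC -det_mulmx mulmxE H det1; split=> //.
Qed.

Definition Mx (F : fieldType) n (A : 'M[F]_n) : 'M[{poly F}]_n :=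
  1%:M - 'X *: map_mx polyC A.

Lemma MxE (F : fieldType) n (A : 'M[F]_n) i j :
  Mx A i j = (i == j)%:R - 'X * (A i j)%:P.
Proof. by rewrite /Mx !mxE. Qed.

Lemma coef_nonid (F : fieldType) n (P : znz_pattern n) (A : 'M[F]_n)
  (hR : realization P A) m (s : 'S_n) :
  s != 1%g ->
  (forall k : nat, (2 <= k)%N -> (k <= m)%N -> ~ has_k_cycle P k) ->
  (\prod_i Mx A i (s i))`_m = 0.
Proof.
move=> s1 hcyc.
case: (boolP [forall i, (s i != i) ==> P i (s i)]) => [/forallP hall | ].
  have hP : forall i, s i != i -> P i (s i) by move=> i; move/implyP: (hall i).
  have hm := nonfix_big s1 hcyc hP.
  set N := [set i | s i != i] in hm *.
  rewrite (bigID (mem N)) /=.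
  have -> : \prod_(i in N) Mx A i (s i) =
            'X^#|N| * \prod_(i in N) (- (A i (s i))%:P).
    rewrite -prodr_const -big_split /=; apply: eq_bigr => i; rewrite inE => hi.
    by rewrite MxE eq_sym (negbTE hi) sub0r mulrN.
  by rewrite -mulrA coefXnM hm.
rewrite negb_forall => /existsP [i]; rewrite negb_imply => /andP [hi hPi].
rewrite (bigD1 i) //= MxE eq_sym (negbTE hi).
have -> : A i (s i) = 0 by apply/eqP; rewrite -[_ == 0]negbK hR (negbTE hPi).
by rewrite mulr0 subr0 mul0r coef0.
Qed.

Lemma coef_id (F : fieldType) n (P : znz_pattern n) (A : 'M[F]_n)
  (hR : realization P A) :
  (\prod_i Mx A i i)`_(num_nonzero_diag P) = \prod_(i | P i i) (- A i i).
Proof.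
have hm : num_nonzero_diag P = #|[pred i | P i i]|.
  by rewrite /num_nonzero_diag cardsE.
rewrite (bigID (fun i => P i i)) /= [X in _ * X]big1 ?mulr1; last first.
  move=> i hPi; rewrite MxE eqxx.
  have -> : A i i = 0 by apply/eqP; rewrite -[_ == 0]negbK hR (negbTE hPi).
  by rewrite mulr0 subr0.
have hf : forall i, P i i -> Mx A i i = (- A i i)%:P * 'X + 1%:P.
  by move=> i _; rewrite MxE eqxx polyCN mulNr mulrC addrC.
have nz : forall i, P i i -> A i i != 0 by move=> i hPi; rewrite hR.
have hs : forall i, P i i -> size (Mx A i i) = 2%N.
  by move=> i hPi; rewrite hf // size_MXaddC polyC_eq0 oppr_eq0 (negbTE (nz i hPi))
    /= size_polyC oppr_eq0 nz.
have hsz : size (\prod_(i | P i i) Mx A i i) = (num_nonzero_diag P).+1.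
  rewrite size_prod; last by move=> i hPi; rewrite -size_poly_eq0 hs.
  rewrite (eq_bigr (fun _ => 2%N)) // sum_nat_const hm.
  set c := #|_|; rewrite muln2 -addnn -addSn addnK //.
have -> : num_nonzero_diag P = (size (\prod_(i | P i i) Mx A i i)).-1 by rewrite hsz.
rewrite -lead_coefE lead_coef_prod; apply: eq_bigr => i hPi.
by rewrite lead_coefE hs // hf // coefD coefMX coefC /= coefC addr0.
Qed.

Lemma coef_det (F : fieldType) n (P : znz_pattern n) (A : 'M[F]_n)
  (hR : realization P A) :
  (forall k : nat, (2 <= k)%N -> (k <= num_nonzero_diag P)%N -> ~ has_k_cycle P k) ->
  (\det (Mx A))`_(num_nonzero_diag P) = \prod_(i | P i i) (- A i i).
Proof.
move=> hcyc.
rewrite /determinant coef_sum (bigD1 1%g) //= [X in _ + X]big1 ?addr0; last first.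
  move=> s hs; rewrite mulr_sign; case: ifP => _;
    by rewrite ?coefN (coef_nonid hR hs hcyc) ?oppr0.
rewrite odd_perm1 expr0 mul1r -(coef_id hR); congr (_`_ _).
by under eq_bigr => i _ do rewrite perm1.
Qed.

Theorem corollary4p5 (n : nat) (P : znz_pattern n) :
  (2 <= num_nonzero_diag P)%N ->
  (forall k : nat, (2 <= k)%N -> (k <= num_nonzero_diag P)%N -> ~ has_k_cycle P k) ->
  forall F : fieldType, ~ potentially_nilpotent F P.
Proof.
move=> hm hcyc F [A [hR [k Ak]]].
case: n P A hR Ak hm hcyc => [|n] P A hR Ak hm hcyc.
  move: hm; rewrite /num_nonzero_diag.
  have := max_card (mem [set i : 'I_0 | P i i]); rewrite card_ord.
  by move=> h1 h2; have := leq_trans h2 h1.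
have hu := det_unit Ak.
have hc := coef_det hR hcyc.
rewrite poly_unitE in hu; case/andP: hu => /eqP hs _.
rewrite nth_default in hc; last first.
  by rewrite /Mx hs; apply: leq_trans hm.
have : \prod_(i | P i i) - A i i != 0.
  by apply/prodf_neq0 => i hPi; rewrite oppr_eq0 hR.
by rewrite -hc eqxx.
Qed.
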